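(* Let $n\ge 1$ be an integer and let $x$ be an integer with $0\le x\le n-1$ such that there exists a positive divisor $h$ of $x$ with $(2x+1)\mid(2n-2h+1)$. Then $F_{n,n-x}=1$.
   Context: Define maps $G,S:\mathbb Z^2\to\mathbb Z^2$ by $G(x,y)=(x+y,y)$ and $S(x,y)=(3x-2y+1,\,2x-y+1)$. Define the array $(F_{n,k})_{n,k\ge 0}$ by $F_{0,0}=1$ and, for $(n,k)\neq(0,0)$, $F_{n,k}$ is the number of finite words $w=w_1w_2\cdots w_m$ ($m\ge 0$) over the alphabet $\{G,S\}$ with $w_1\circ w_2\circ\cdots\circ w_m(1,1)=(n,k)$ (the empty word acts as the identity). Equivalently: start with all entries $0$, set $F_{0,0}=1$ and $F_{1,1}=1$, and thereafter, whenever an entry $F_{n,k}$ with $n\ge 1$ changes its value, increase $F_{n+k,k}$ and $F_{3n+1-2k,\,2n+1-k}$ by $1$. Every positive integer divides $0$. *)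

(* Defs.v *)
From Stdlib Require Import ZArith List.
Import ListNotations.
Open Scope Z_scope.

Inductive letter : Type := LG | LS.

Definition apply_letter (l : letter) (p : Z * Z) : Z * Z :=
  let (x, y) := p in
  match l with
  | LG => (x + y, y)
  | LS => (3 * x - 2 * y + 1, 2 * x - y + 1)
  end.

Fixpoint act (w : list letter) (p : Z * Z) : Z * Z :=
  match w with
  | [] => p
  | l :: w' => apply_letter l (act w' p)
  end.

(* [F_is n k m] : "F_{n,k} = m", i.e. F_{0,0} = 1, and for (n,k) <> (0,0)
   the number of words w over {G,S} with w(1,1) = (n,k) is exactly m
   (there is a duplicate-free list of length m enumerating exactly these words). *)
Definition F_is (n k : Z) (m : nat) : Prop :=
  if (Z.eqb n 0 && Z.eqb k 0)%bool then m = 1%nat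
  else exists ws : list (list letter),
    NoDup ws /\ length ws = m /\
    (forall w, In w ws <-> act w (1, 1) = (n, k)).

(* Main.v *)
Require Import Defs.
From Stdlib Require Import ZArith List Lia.
Import ListNotations.
Open Scope Z_scope.

Lemma apG x y : apply_letter LG (x, y) = (x + y, y).
Proof. reflexivity. Qed.
Lemma apS x y : apply_letter LS (x, y) = (3 * x - 2 * y + 1, 2 * x - y + 1).
Proof. reflexivity. Qed.

Lemma inv_act : forall w p q, act w (1,1) = (p, q) -> 0 <= p - q /\ 1 <= q.
Proof.
  induction w as [|l w IH]; intros p q E; cbn [act] in E; rewrite ?apG, ?apS in E.
  - pose proof (f_equal fst E) as E1; pose proof (f_equal snd E) as E2; cbn [fst snd] in E1, E2; lia.
  - destruct (act w (1,1)) as [p0 q0] eqn:E0.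
    destruct (IH p0 q0 eq_refl).
    destruct l; cbn [act] in E; rewrite ?apG, ?apS in E; pose proof (f_equal fst E) as E1; pose proof (f_equal snd E) as E2; cbn [fst snd] in E1, E2; lia.
Qed.

Lemma uniq_act : forall w w', act w (1,1) = act w' (1,1) -> w = w'.
Proof.
  induction w as [|a w IH]; intros [|l w'] E; cbn [act] in E; rewrite ?apG, ?apS in E; auto.
  - destruct (act w' (1,1)) as [p q] eqn:E0.
    destruct (inv_act _ _ _ E0).
    destruct l; cbn [act] in E; rewrite ?apG, ?apS in E; pose proof (f_equal fst E) as E1; pose proof (f_equal snd E) as E2; cbn [fst snd] in E1, E2; lia.
  - destruct (act w (1,1)) as [p q] eqn:E0.
    destruct (inv_act _ _ _ E0).
    destruct a; cbn [act] in E; rewrite ?apG, ?apS in E; pose proof (f_equal fst E) as E1; pose proof (f_equal snd E) as E2; cbn [fst snd] in E1, E2; lia.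
  - destruct (act w (1,1)) as [p q] eqn:E0.
    destruct (act w' (1,1)) as [p' q'] eqn:E1.
    destruct (inv_act _ _ _ E0). destruct (inv_act _ _ _ E1).
    destruct a, l; cbn [act] in E; rewrite ?apG, ?apS in E;
    pose proof (f_equal fst E) as F1; pose proof (f_equal snd E) as F2; cbn [fst snd] in F1, F2;
    try lia; f_equal; apply IH; rewrite ?E0, ?E1; f_equal; lia.
Qed.

Lemma act_app : forall u v p, act (u ++ v) p = act u (act v p).
Proof. induction u; intros; simpl; [reflexivity | rewrite IHu; reflexivity]. Qed.

Lemma act_S : forall k x y,
  act (repeat LS k) (x, y) =
  (x + Z.of_nat k * (2 * (x - y) + 1), y + Z.of_nat k * (2 * (x - y) + 1)).
Proof.
  induction k; intros; cbn [act repeat].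
  - f_equal; lia.
  - rewrite IHk, apS, Nat2Z.inj_succ. f_equal; lia.
Qed.

Lemma act_G : forall j x y,
  act (repeat LG j) (x, y) = (x + Z.of_nat j * y, y).
Proof.
  induction j; intros; cbn [act repeat].
  - f_equal; lia.
  - rewrite IHj, apG, Nat2Z.inj_succ. f_equal; lia.
Qed.

Lemma exist_word : forall h j k, 1 <= h -> 0 <= j -> 0 <= k ->
  exists w, act w (1,1) = (j*h + h + k*(2*(j*h)+1), h + k*(2*(j*h)+1)).
Proof.
  intros h j k Hh Hj Hk.
  exists (repeat LS (Z.to_nat k) ++ repeat LG (Z.to_nat j) ++ repeat LS (Z.to_nat (h-1))).
  rewrite !act_app, act_S, act_G, act_S.
  rewrite !Z2Nat.id by lia.
  f_equal; ring_simplify; nia.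
Qed.

Theorem theorem9 (n x : Z) :
  1 <= n ->
  0 <= x <= n - 1 ->
  (exists h : Z, 0 < h /\ (h | x) /\ (2 * x + 1 | 2 * n - 2 * h + 1)) ->
  F_is n (n - x) 1%nat.
Proof.
  intros Hn Hx [h [Hh [Hd1 Hd2]]].
  unfold F_is.
  destruct (Z.eqb n 0) eqn:En; [apply Z.eqb_eq in En; lia|]; cbn [andb].
  assert (Hex : exists w, act w (1,1) = (n, n - x)).
  { destruct (Z.eq_dec x 0) as [H0|H0].
    - subst x. destruct (exist_word 1 0 (n-1)) as [w Hw]; try lia.
      exists w. rewrite Hw. f_equal; lia.
    - destruct Hd1 as [j Hj].
      assert (Hhx : h <= x) by (apply Z.divide_pos_le; [lia| exists j; exact Hj]).
      destruct Hd2 as [c Hc].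
      destruct (Z.Even_or_Odd c) as [[q Hq]|[q Hq]]; subst c.
      + exfalso. nia.
      + assert (Hq1 : n - x - h = q * (2*x+1)) by nia.
        assert (0 <= q) by nia.
        assert (0 <= j) by nia.
        destruct (exist_word h j q) as [w Hw]; try lia.
        exists w. rewrite Hw. rewrite <- Hj. f_equal; nia. }
  destruct Hex as [w Hw].
  exists [w]. split; [constructor; [simpl; tauto | constructor] |].
  split; [reflexivity|].
  intros w'. split.
  - intros [<-|[]]. exact Hw.
  - intros H'. left. apply uniq_act. rewrite H', Hw. reflexivity.
Qed.
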